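(* For a rectangular element $K=[x_1,x_2]\times[y_1,y_2]$ of a regular rectangular partition $T_h$, with vertices $P_1=(x_1,y_1)$, $P_2=(x_2,y_1)$, $P_3=(x_2,y_2)$, $P_4=(x_1,y_2)$, and for $w_h\in U_h$ with $w_i=w_h(P_i)$, define $$|w_h|_{1,h,K}^2=(w_2-w_1)^2+(w_3-w_2)^2+(w_3-w_4)^2+(w_4-w_1)^2,\qquad |w_h|_{1,h}=\Big(\sum_{K\in T_h}|w_h|_{1,h,K}^2\Big)^{1/2}.$$ Then for every $K\in T_h$ and every $w_h\in U_h$, $$\frac{1}{6\gamma}|w_h|_{1,h,K}^2\le|w_h|_{1,K}^2\le\frac{\gamma}{2}|w_h|_{1,h,K}^2;$$ in particular $|\cdot|_{1,h}$ is equivalent to $|\cdot|_1$ on $U_h$.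
   Context: $\Omega\subset\mathbb{R}^2$ is an open rectangle. $T_h$ is a conforming partition of $\overline\Omega$ into closed rectangles with sides parallel to the axes; $h_K$ is the diameter of $K$, $\rho_K$ the diameter of the largest ball contained in $K$, and regularity means $h_K/\rho_K\le\gamma$ for all $K\in T_h$. $U_h=\{v\in C^0(\overline\Omega): v|_K\in Q_1(K)\ \forall K,\ v|_{\partial\Omega}=0\}$ ($Q_1$ = bilinear polynomials). $|w|_{1,K}^2=\int_K|\nabla w|^2$ and $|w|_1^2=\int_\Omega|\nabla w|^2$. *)

(* Defs.v *)
From Stdlib Require Import Reals List.
From Coquelicot Require Import Coquelicot.
Open Scope R_scope.

Record rect := Rect { rx1 : R; rx2 : R; ry1 : R; ry2 : R }.

Definition rect_ok (K : rect) : Prop := rx1 K < rx2 K /\ ry1 K < ry2 K.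

Definition in_rect (K : rect) (x y : R) : Prop :=
  rx1 K <= x <= rx2 K /\ ry1 K <= y <= ry2 K.

Definition on_bdry (K : rect) (x y : R) : Prop :=
  in_rect K x y /\ (x = rx1 K \/ x = rx2 K \/ y = ry1 K \/ y = ry2 K).

Definition P1 K : R * R := (rx1 K, ry1 K).
Definition P2 K : R * R := (rx2 K, ry1 K).
Definition P3 K : R * R := (rx2 K, ry2 K).
Definition P4 K : R * R := (rx1 K, ry2 K).
Definition vertices K : list (R * R) := P1 K :: P2 K :: P3 K :: P4 K :: nil.
Definition edges K : list ((R * R) * (R * R)) :=
  (P1 K, P2 K) :: (P2 K, P3 K) :: (P3 K, P4 K) :: (P4 K, P1 K) :: nil.

Definition on_seg (e : (R * R) * (R * R)) (z : R * R) : Prop :=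
  exists t, 0 <= t <= 1 /\
    fst z = fst (fst e) + t * (fst (snd e) - fst (fst e)) /\
    snd z = snd (fst e) + t * (snd (snd e) - snd (fst e)).

(* diameter of K and diameter of the largest ball (disc) contained in K *)
Definition h_K (K : rect) : R := sqrt ((rx2 K - rx1 K) ^ 2 + (ry2 K - ry1 K) ^ 2).
Definition rho_K (K : rect) : R := Rmin (rx2 K - rx1 K) (ry2 K - ry1 K).

Definition conforming_partition (Om : rect) (T : list rect) : Prop :=
  NoDup T /\
  (forall K, In K T -> rect_ok K /\
     forall x y, in_rect K x y -> in_rect Om x y) /\
  (forall x y, in_rect Om x y -> exists K, In K T /\ in_rect K x y) /\
  (forall K1 K2, In K1 T -> In K2 T -> K1 <> K2 ->
     (forall x y, ~ (in_rect K1 x y /\ in_rect K2 x y)) \/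
     (exists v, In v (vertices K1) /\ In v (vertices K2) /\
        forall x y, (in_rect K1 x y /\ in_rect K2 x y) <-> (x, y) = v) \/
     (exists e1 e2, In e1 (edges K1) /\ In e2 (edges K2) /\
        (forall z, on_seg e1 z <-> on_seg e2 z) /\
        forall x y, (in_rect K1 x y /\ in_rect K2 x y) <-> on_seg e1 (x, y))).

Definition regular (gamma : R) (T : list rect) : Prop :=
  forall K, In K T -> h_K K / rho_K K <= gamma.

Record Q1 := MkQ1 { q0 : R; qx : R; qy : R; qxy : R }.
Definition q1 (p : Q1) (x y : R) : R := q0 p + qx p * x + qy p * y + qxy p * x * y.

Definition in_Uh (Om : rect) (T : list rect) (w : R -> R -> R) : Prop :=
  (forall x y, in_rect Om x y -> forall eps, 0 < eps -> exists delta, 0 < delta /\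
     forall x' y', in_rect Om x' y' -> Rabs (x' - x) < delta -> Rabs (y' - y) < delta ->
       Rabs (w x' y' - w x y) < eps) /\
  (forall K, In K T -> exists p : Q1, forall x y, in_rect K x y -> w x y = q1 p x y) /\
  (forall x y, on_bdry Om x y -> w x y = 0).

(* |v|_{1,K}^2 = \int_K |grad v|^2, for a smooth function v (used with v the
   Q1 polynomial representing w_h on K) *)
Definition semi1K (K : rect) (v : R -> R -> R) : R :=
  RInt (fun x => RInt (fun y =>
          (Derive (fun t => v t y) x) ^ 2 + (Derive (fun t => v x t) y) ^ 2)
        (ry1 K) (ry2 K)) (rx1 K) (rx2 K).

Definition wv (w : R -> R -> R) (P : R * R) : R := w (fst P) (snd P).
Definition semi1hK (K : rect) (w : R -> R -> R) : R :=
  (wv w (P2 K) - wv w (P1 K)) ^ 2 + (wv w (P3 K) - wv w (P2 K)) ^ 2 +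
  (wv w (P3 K) - wv w (P4 K)) ^ 2 + (wv w (P4 K) - wv w (P1 K)) ^ 2.

Definition sumT (T : list rect) (f : rect -> R) : R := fold_right Rplus 0 (map f T).

(* Main.v *)
Require Import Defs.
From Stdlib Require Import Reals List Lra Psatz.
From Coquelicot Require Import Coquelicot.
Open Scope R_scope.

Lemma Dx (p : Q1) x y : Derive (fun t => q1 p t y) x = qx p + qxy p * y.
Proof. apply is_derive_unique; unfold q1; auto_derive; trivial; ring. Qed.
Lemma Dy (p : Q1) x y : Derive (fun t => q1 p x t) y = qy p + qxy p * x.
Proof. apply is_derive_unique; unfold q1; auto_derive; trivial; ring. Qed.

Definition Fi (p : Q1) x y := qx p ^ 2 * y + qx p * qxy p * y ^ 2 + qxy p ^ 2 * y ^ 3 / 3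
   + (qy p + qxy p * x) ^ 2 * y.

Lemma inner (p : Q1) x y1 y2 :
  RInt (fun y => (qx p + qxy p * y) ^ 2 + (qy p + qxy p * x) ^ 2) y1 y2 = Fi p x y2 - Fi p x y1.
Proof.
  apply is_RInt_unique. apply (is_RInt_derive (Fi p x)).
  - intros; unfold Fi; auto_derive; trivial; field.
  - intros. apply (@ex_derive_continuous R_AbsRing R_NormedModule). auto_derive; trivial.
Qed.

Definition Ho (p : Q1) y1 y2 x :=
  (qx p ^ 2 * y2 + qx p * qxy p * y2 ^ 2 + qxy p ^ 2 * y2 ^ 3 / 3
   - (qx p ^ 2 * y1 + qx p * qxy p * y1 ^ 2 + qxy p ^ 2 * y1 ^ 3 / 3)) * x
  + (y2 - y1) * (qy p ^ 2 * x + qy p * qxy p * x ^ 2 + qxy p ^ 2 * x ^ 3 / 3).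

Lemma outer (p : Q1) x1 x2 y1 y2 :
  RInt (fun x => Fi p x y2 - Fi p x y1) x1 x2 = Ho p y1 y2 x2 - Ho p y1 y2 x1.
Proof.
  apply is_RInt_unique. apply (is_RInt_derive (Ho p y1 y2)).
  - intros; unfold Ho, Fi; auto_derive; trivial; field.
  - intros. apply (@ex_derive_continuous R_AbsRing R_NormedModule). unfold Fi; auto_derive; trivial.
Qed.

Lemma semi1K_eq (K : rect) (p : Q1) :
  semi1K K (q1 p) =
  (rx2 K - rx1 K) * (ry2 K - ry1 K) *
   (((qx p + qxy p * ry1 K) ^ 2 + (qx p + qxy p * ry1 K) * (qx p + qxy p * ry2 K)
     + (qx p + qxy p * ry2 K) ^ 2) / 3
  + ((qy p + qxy p * rx1 K) ^ 2 + (qy p + qxy p * rx1 K) * (qy p + qxy p * rx2 K)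
     + (qy p + qxy p * rx2 K) ^ 2) / 3).
Proof.
  unfold semi1K.
  rewrite (RInt_ext _ (fun x => Fi p x (ry2 K) - Fi p x (ry1 K))).
  2:{ intros x _. rewrite <- inner. apply RInt_ext. intros y _. rewrite Dx, Dy. reflexivity. }
  rewrite outer. unfold Ho. field.
Qed.
Lemma alg a b g al be ga de : 0 < a -> 0 < b -> a <= g * b -> b <= g * a ->
  / (6 * g) * (a^2*(al^2+be^2) + b^2*(ga^2+de^2)) <=
   a * b * ((al^2+al*be+be^2)/3 + (ga^2+ga*de+de^2)/3) /\
  a * b * ((al^2+al*be+be^2)/3 + (ga^2+ga*de+de^2)/3) <= g / 2 * (a^2*(al^2+be^2) + b^2*(ga^2+de^2)).
Proof.
  intros Ha Hb H1 H2.
  assert (Hg : 0 < g) by nra.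
  set (S1 := al^2+be^2). set (S2 := ga^2+de^2).
  assert (Q1l : S1/2 <= al^2+al*be+be^2) by (pose proof (pow2_ge_0 (al+be)); unfold S1; nra).
  assert (Q1u : al^2+al*be+be^2 <= 3*S1/2) by (pose proof (pow2_ge_0 (al-be)); unfold S1; nra).
  assert (Q2l : S2/2 <= ga^2+ga*de+de^2) by (pose proof (pow2_ge_0 (ga+de)); unfold S2; nra).
  assert (Q2u : ga^2+ga*de+de^2 <= 3*S2/2) by (pose proof (pow2_ge_0 (ga-de)); unfold S2; nra).
  assert (S1p : 0 <= S1) by (pose proof (pow2_ge_0 al); pose proof (pow2_ge_0 be); unfold S1; nra).
  assert (S2p : 0 <= S2) by (pose proof (pow2_ge_0 ga); pose proof (pow2_ge_0 de); unfold S2; nra).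
  assert (A1 : a^2*S1 <= g*(a*b)*S1) by (apply Rmult_le_compat_r; nra).
  assert (A2 : b^2*S2 <= g*(a*b)*S2) by (apply Rmult_le_compat_r; nra).
  assert (B1 : (a*b)*S1 <= g*a^2*S1) by (apply Rmult_le_compat_r; nra).
  assert (B2 : (a*b)*S2 <= g*b^2*S2) by (apply Rmult_le_compat_r; nra).
  assert (ab0 : 0 < a*b) by nra.
  split.
  - apply (Rmult_le_reg_l (6*g)); [lra|].
    rewrite <- Rmult_assoc, Rinv_r by lra.
    assert (a*b*S1 <= a*b*(al^2+al*be+be^2)*2) by nra.
    assert (a*b*S2 <= a*b*(ga^2+ga*de+de^2)*2) by nra.
    nra.
  - assert (a*b*(al^2+al*be+be^2) <= a*b*(3*S1/2)) by nra.
    assert (a*b*(ga^2+ga*de+de^2) <= a*b*(3*S2/2)) by nra.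
    nra.
Qed.

Lemma ratio K g : rect_ok K -> h_K K / rho_K K <= g ->
  rx2 K - rx1 K <= g * (ry2 K - ry1 K) /\ ry2 K - ry1 K <= g * (rx2 K - rx1 K).
Proof.
  intros [Hx Hy] H. unfold h_K, rho_K in H.
  set (a := rx2 K - rx1 K) in *. set (b := ry2 K - ry1 K) in *.
  assert (Ha : 0 < a) by (unfold a; lra). assert (Hb : 0 < b) by (unfold b; lra).
  assert (Hm : 0 < Rmin a b) by (apply Rmin_glb_lt; lra).
  assert (Hh : sqrt (a^2+b^2) <= g * Rmin a b).
  { apply (Rmult_le_reg_r (/ Rmin a b)). apply Rinv_0_lt_compat; lra.
    rewrite Rmult_assoc, Rinv_r by lra. lra. }
  assert (Sa : a <= sqrt (a^2+b^2)).
  { assert (a^2 <= a^2+b^2) by nra. apply sqrt_le_1_alt in H0. rewrite sqrt_pow2 in H0 by lra. exact H0. }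
  assert (Sb : b <= sqrt (a^2+b^2)).
  { assert (b^2 <= a^2+b^2) by nra. apply sqrt_le_1_alt in H0. rewrite sqrt_pow2 in H0 by lra. exact H0. }
  assert (Hg : 0 <= g).
  { destruct (Rle_lt_dec 0 g); auto. pose proof (sqrt_pos (a^2+b^2)). pose proof (Rmult_lt_compat_r (Rmin a b) g 0 Hm r). lra. }
  assert (g * Rmin a b <= g * a) by (apply Rmult_le_compat_l; [lra| apply Rmin_l]).
  assert (g * Rmin a b <= g * b) by (apply Rmult_le_compat_l; [lra| apply Rmin_r]).
  split; lra.
Qed.

Lemma elem K (p : Q1) g (w : R -> R -> R) : rect_ok K -> h_K K / rho_K K <= g ->
  (forall x y, in_rect K x y -> w x y = q1 p x y) ->
     / (6 * g) * semi1hK K w <= semi1K K (q1 p) /\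
     semi1K K (q1 p) <= g / 2 * semi1hK K w.
Proof.
  intros Hok Hr Hw. destruct (ratio K g Hok Hr) as [R1 R2].
  destruct Hok as [Hx Hy].
  assert (E : semi1hK K w =
    (rx2 K - rx1 K)^2 * ((qx p + qxy p * ry1 K)^2 + (qx p + qxy p * ry2 K)^2) +
    (ry2 K - ry1 K)^2 * ((qy p + qxy p * rx1 K)^2 + (qy p + qxy p * rx2 K)^2)).
  { unfold semi1hK, wv, P1, P2, P3, P4; simpl.
    rewrite !Hw by (unfold in_rect; lra). unfold q1. ring. }
  rewrite E, semi1K_eq. apply alg; lra.
Qed.

Lemma sum_le (T : list rect) (f g : rect -> R) :
  (forall K, In K T -> f K <= g K) -> sumT T f <= sumT T g.
Proof.
  induction T as [|K T IH]; intros H; unfold sumT; simpl. lra.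
  apply Rplus_le_compat. apply H; left; auto.
  apply IH. intros; apply H; right; auto.
Qed.

Lemma sum_scal (T : list rect) (c : R) (f : rect -> R) :
  c * sumT T f = sumT T (fun K => c * f K).
Proof. induction T as [|K T IH]; unfold sumT in *; simpl. ring. rewrite <- IH. ring. Qed.

Theorem lemma4p1 (Om : rect) (T : list rect) (gamma : R) (w : R -> R -> R) :
  rect_ok Om ->
  conforming_partition Om T ->
  regular gamma T ->
  in_Uh Om T w ->
  (forall K (p : Q1), In K T -> (forall x y, in_rect K x y -> w x y = q1 p x y) ->
     / (6 * gamma) * semi1hK K w <= semi1K K (q1 p) /\
     semi1K K (q1 p) <= gamma / 2 * semi1hK K w) /\
  (forall rep : rect -> Q1,
     (forall K, In K T -> forall x y, in_rect K x y -> w x y = q1 (rep K) x y) ->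
     / (6 * gamma) * sumT T (fun K => semi1hK K w)
       <= sumT T (fun K => semi1K K (q1 (rep K))) /\
     sumT T (fun K => semi1K K (q1 (rep K)))
       <= gamma / 2 * sumT T (fun K => semi1hK K w)).
Proof.
  intros _ [_ [HT _]] Hreg _.
  assert (P : forall K (p : Q1), In K T -> (forall x y, in_rect K x y -> w x y = q1 p x y) ->
     / (6 * gamma) * semi1hK K w <= semi1K K (q1 p) /\
     semi1K K (q1 p) <= gamma / 2 * semi1hK K w).
  { intros K p HK Hw. apply elem; auto. apply (HT K HK). }
  split; [exact P|].
  intros rep Hrep. rewrite !sum_scal. split; apply sum_le; intros K HK;
  apply (P K (rep K) HK (Hrep K HK)).
Qed.
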